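(* Let $X$ be a regular Hausdorff space. If $X$ contains a closed subspace homeomorphic to the sequential fan $S_\omega$, then $\mathcal{F}_2(X)$ contains a closed subspace homeomorphic to the Arens space $S_2$.
   Context: $\mathcal{F}_2(X)$ is the set of nonempty subsets of $X$ of cardinality at most 2, with the Vietoris topology (base: $\langle U_1,\dots,U_k\rangle=\{A: A\subset\bigcup_i U_i,\ A\cap U_j\neq\emptyset\ \forall j\}$, $U_i$ open in $X$). The sequential fan $S_\omega$ is obtained from the topological sum of countably many convergent sequences $T_n\cup\{x_n\}$ ($T_n$ a sequence converging to $x_n$), $n\in\omega$, by identifying all limit points $x_n$ to a single point. The Arens space $S_2$ is the set $\{\infty\}\cup\{x_n:n\in\mathbb{N}\}\cup\{x_{n,m}: n,m\}$ where each $x_{n,m}$ is isolated, basic neighborhoods of $x_n$ are $\{x_n\}\cup\{x_{n,m}: m>k\}$, and basic neighborhoods of $\infty$ are $\{\infty\}\cup\bigcup_{n>k}V_n$ with $V_n$ a neighborhood of $x_n$. *)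

(* Defs.v *)
From HB Require Import structures.
From mathcomp Require Import all_boot all_order all_algebra.
From mathcomp Require Import all_classical all_reals all_analysis.

Set Implicit Arguments.
Unset Strict Implicit.
Unset Printing Implicit Defensive.

Local Open Scope classical_set_scope.

(* Each space below is given by a family of basic open sets, turned into a
   topologicalType with the library factory [isSubBaseTopological]
   (index type [set T], index set = the family, [b] = identity).  Since the
   families used are bases, the generated topology is the one they generate
   as a base. *)

Definition F2 (X : Type) := {A : set X | exists x y : X, A = [set x] `|` [set y]}.

HB.instance Definition _ (X : Type) := gen_eqMixin (F2 X).
HB.instance Definition _ (X : Type) := gen_choiceMixin (F2 X).

(* <U_0, ..., U_{k-1}> = {A : A ⊆ ∪ U_i, A ∩ U_j ≠ ∅ for all j} *)
Definition vietoris_set (X : Type) (k : nat) (U : nat -> set X) : set (F2 X) :=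
  [set A | (forall x, proj1_sig A x -> exists2 i, (i < k)%N & U i x)
           /\ (forall j, (j < k)%N -> proj1_sig A `&` U j !=set0)].

Definition vietoris_base (X : topologicalType) : set (set (F2 X)) :=
  [set B | exists (k : nat) (U : nat -> set X),
     [/\ (0 < k)%N, (forall i, (i < k)%N -> open (U i)) & B = vietoris_set k U]].

HB.instance Definition _ (X : topologicalType) :=
  isSubBaseTopological.Build (F2 X) (@vietoris_base X) id.

(* None = the common limit point; Some (n, m) = m-th term of n-th sequence *)
Definition seq_fan := option (nat * nat).

HB.instance Definition _ := Choice.on seq_fan.

Definition fan_base : set (set seq_fan) :=
  [set B | (exists p : nat * nat, B = [set Some p])
        \/ (exists f : nat -> nat,
              B = [set None] `|` [set p | exists n m : nat, (f n < m)%N /\ p = Some (n, m)])].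

HB.instance Definition _ := isSubBaseTopological.Build seq_fan fan_base id.

(* None = infinity; Some (n, None) = x_n; Some (n, Some m) = x_{n,m} *)
Definition arens := option (nat * option nat).

HB.instance Definition _ := Choice.on arens.

Definition arens_nbhs_x (n k : nat) : set arens :=
  [set Some (n, None)] `|` [set p | exists2 m : nat, (k < m)%N & p = Some (n, Some m)].

Definition arens_base : set (set arens) :=
  [set B | (exists n m : nat, B = [set Some (n, Some m)])
        \/ (exists n k : nat, B = arens_nbhs_x n k)
        \/ (exists (k : nat) (f : nat -> nat),
              B = [set None] `|` \bigcup_(n in [set n | (k < n)%N]) arens_nbhs_x n (f n))].

HB.instance Definition _ := isSubBaseTopological.Build arens arens_base id.

(* [f] is a homeomorphism of [S] onto the closed subspace [range f] of [X]
   (with the subspace topology). *)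
Definition closed_embedding (S X : topologicalType) (f : S -> X) : Prop :=
  [/\ injective f, continuous f, closed (range f)
    & forall U : set S, open U -> exists2 V : set X, open V & f @` U = V `&` range f].

Definition contains_closed_copy (S X : topologicalType) : Prop :=
  exists f : S -> X, closed_embedding f.

(* Main.v *)
Require Import Defs.
From HB Require Import structures.
From mathcomp Require Import all_boot all_order all_algebra.
From mathcomp Require Import all_classical all_reals all_analysis.

Set Implicit Arguments.
Unset Strict Implicit.
Unset Printing Implicit Defensive.
Local Open Scope classical_set_scope.

Definition pre {S T : Type} (f : S -> T) (A : set S) : set T :=
  [set y | forall q, y = f q -> A q].

Lemma finI_G (T : Type) (D : set (set T)) (G : set (set T)) p :
  G setT -> (forall A B, G A -> G B -> G (A `&` B)) ->
  (forall B, D B -> B p -> G B) ->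
  forall F, finI_from D id F -> F p -> G F.
Proof.
move=> GT GI GD F [E sE <-] Fp.
rewrite bigcap_fset big_seq; apply: big_rec => // i x iE Gx.
apply: GI => //; apply: GD.
  have := sE i iE; by rewrite inE.
exact: Fp.
Qed.

Lemma fan_nbhsP (p : seq_fan) A : nbhs p A ->
  exists B, [/\ finI_from fan_base id B, B p & B `<=` A].
Proof.
move=> [B [[D' sD' eB] Bp BA]].
rewrite -eB in Bp BA; case: Bp => i Di bi.
exists i; split => //; first exact: sD'.
by move=> z iz; apply: BA; exists i.
Qed.

Lemma fan_open B : fan_base B -> open B.
Proof.
move=> fB; exists [set B]; last exact: bigcup_set1.
by move=> _ ->; exact: finI_from1.
Qed.

Lemma arens_nbhsP (p : arens) A : nbhs p A ->
  exists B, [/\ finI_from arens_base id B, B p & B `<=` A].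
Proof.
move=> [B [[D' sD' eB] Bp BA]].
rewrite -eB in Bp BA; case: Bp => i Di bi.
exists i; split => //; first exact: sD'.
by move=> z iz; apply: BA; exists i.
Qed.

Lemma arens_open B : arens_base B -> open B.
Proof.
move=> fB; exists [set B]; last exact: bigcup_set1.
by move=> _ ->; exact: finI_from1.
Qed.

Lemma F2_nbhsP (X : topologicalType) (p : F2 X) A : nbhs p A ->
  exists B, [/\ finI_from (@vietoris_base X) id B, B p & B `<=` A].
Proof.
move=> [B [[D' sD' eB] Bp BA]].
rewrite -eB in Bp BA; case: Bp => i Di bi.
exists i; split => //; first exact: sD'.
by move=> z iz; apply: BA; exists i.
Qed.

Lemma F2_open (X : topologicalType) B : @vietoris_base X B -> open B.
Proof.
move=> fB; exists [set B]; last exact: bigcup_set1.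
by move=> _ ->; exact: finI_from1.
Qed.

Definition emb {S T : topologicalType} (f : S -> T) :=
  forall x A, nbhs x A -> nbhs (f x) (pre f A).

Lemma emb_open {S T : topologicalType} (f : S -> T) : emb f ->
  forall U : set S, open U -> exists2 V : set T, open V & f @` U = V `&` range f.
Proof.
move=> ef U oU; exists (interior (pre f U)); first exact: open_interior.
rewrite eqEsubset; split.
  move=> _ [x Ux <-]; split; last by exists x.
  apply: ef; exact: open_nbhs_nbhs.
move=> y [/interior_subset Hy [q _ eq]].
by exists q => //; apply: Hy.
Qed.

Lemma open_emb {S T : topologicalType} (f : S -> T) : injective f ->
  (forall U : set S, open U -> exists2 V : set T, open V & f @` U = V `&` range f) ->
  emb f.
Proof.
move=> fi ho x A; rewrite nbhsE => -[U [oU Ux] UA].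
have [V oV eV] := ho U oU.
have Vfx : V (f x).
  have : (f @` U) (f x) by exists x.
  by rewrite eV => -[].
apply: filterS (open_nbhs_nbhs (conj oV Vfx)) => y Vy q eq.
have : (f @` U) y by rewrite eV; split => //; exists q.
by case=> u Uu; rewrite eq => /fi <-; apply: UA.
Qed.

Lemma closed_rangeP {S T : topologicalType} (f : S -> T) :
  (forall y, ~ range f y -> nbhs y (~` range f)) -> closed (range f).
Proof.
move=> H; rewrite -openC openE => y Hy; exact: H.
Qed.

Lemma ce_comp (S T U : topologicalType) (g : S -> T) (h : T -> U) :
  closed_embedding g -> closed_embedding h -> closed_embedding (h \o g).
Proof.
move=> [gi gc gr go] [hi hc hr ho].
have eg := open_emb gi go; have eh := open_emb hi ho.
split.
- exact: inj_comp.
- by move=> x; apply: continuous_comp; [exact: gc | exact: hc].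
- have [W oW eW] := ho _ (closed_openC gr).
  have -> : range (h \o g) = range h `&` ~` W.
    rewrite eqEsubset; split.
      move=> _ [s _ <-]; split; first by exists (g s).
      move=> Wy; have : (W `&` range h) (h (g s)) by split => //; exists (g s).
      by rewrite -eW => -[t nt /hi et]; apply: nt; exists s.
    move=> y [[t _ <-] nW]; have [[s _ <-]|nt] := pselect (range g t).
      by exists s.
    exfalso; apply: nW; have : (h @` ~` range g) (h t) by exists t.
    by rewrite eW => -[].
  exact: closedI hr (open_closedC oW).
- apply: emb_open => x A nA.
  apply: filterS (eh _ _ (eg _ _ nA)) => y Hy q eq.
  exact: (Hy (g q) eq).
Qed.

Lemma F2_eq (T : Type) (A B : F2 T) : proj1_sig A = proj1_sig B -> A = B.
Proof.
case: A B => [a pa] [b pb] /= e; subst b; congr exist; exact: Prop_irrelevance.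
Qed.

Lemma F2_ne (T : Type) (A : F2 T) : proj1_sig A !=set0.
Proof. by case: A => a [x [y e]] /=; exists x; rewrite e; left. Qed.

Lemma F2map_proof (S T : Type) (f : S -> T) (A : F2 S) :
  exists x y, f @` proj1_sig A = [set x] `|` [set y].
Proof.
case: A => a [x [y e]] /=; exists (f x), (f y).
by rewrite e image_setU !image_set1.
Qed.

Definition F2map (S T : Type) (f : S -> T) (A : F2 S) : F2 T :=
  exist _ (f @` proj1_sig A) (F2map_proof f A).

Lemma viet_nbhs (X : topologicalType) k (U : nat -> set X) (A : F2 X) :
  (0 < k)%N -> (forall i, (i < k)%N -> open (U i)) ->
  vietoris_set k U A -> nbhs A (vietoris_set k U).
Proof.
move=> k0 oU VA; apply: open_nbhs_nbhs; split => //.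
by apply: F2_open; exists k, U.
Qed.

Lemma F2_master (X : topologicalType) (G : set (set (F2 X))) p :
  G setT -> (forall A B, G A -> G B -> G (A `&` B)) ->
  (forall A B, A `<=` B -> G A -> G B) ->
  (forall k U, (0 < k)%N -> (forall i, (i < k)%N -> open (U i)) ->
     vietoris_set k U p -> G (vietoris_set k U)) ->
  forall A, nbhs p A -> G A.
Proof.
move=> GT GI GS GD A /F2_nbhsP [B [fB Bp BA]].
apply: GS BA _; apply: (finI_G GT GI _ fB Bp).
by move=> _ [k [U [k0 oU ->]]] Vp; apply: GD.
Qed.

Lemma ce_F2map (S X : topologicalType) (f : S -> X) :
  closed_embedding f -> closed_embedding (F2map f).
Proof.
move=> [fi fc fr fo]; have ef := open_emb fi fo.
split.
- move=> A B e.
  have e1 : f @` proj1_sig A = f @` proj1_sig B by have := congr1 (@proj1_sig _ _) e.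
  apply: F2_eq; rewrite eqEsubset; split => z Hz.
    have : (f @` proj1_sig B) (f z) by rewrite -e1; exists z.
    by case=> w Bw /fi <-.
  have : (f @` proj1_sig A) (f z) by rewrite e1; exists z.
  by case=> w Bw /fi <-.
- move=> A B nB.
  apply: (@F2_master X (fun B => nbhs A (F2map f @^-1` B)) (F2map f A)) nB.
  + exact: filterT.
  + by move=> ? ? ? ?; apply: filterI.
  + by move=> P Q PQ; apply: filterS => y /PQ.
  move=> k U k0 oU [/= H1 H2].
  have oU' : forall i, (i < k)%N -> open (f @^-1` U i).
    by move=> i ik; apply: open_comp (oU i ik) => x _; exact: fc.
  apply: filterS (viet_nbhs k0 oU' _).
    move=> Z [/= Z1 Z2]; split.
      by move=> _ [x Zx <-]; apply: Z1.
    move=> j jk; have [x [Zx Ux]] := Z2 j jk; by exists (f x); split => //; exists x.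
  split.
    by move=> x Ax; apply: H1; exists x.
  move=> j jk; have [_ [[x Ax <-] Ux]] := H2 j jk; by exists x.
- apply: closed_rangeP => Y nY.
  have [x [Yx nx]] : exists x, proj1_sig Y x /\ ~ range f x.
    apply: contrapT => hn; apply: nY.
    case: Y hn => y [y1 [y2 ey]] /= hn.
    have r1 : range f y1.
      apply: contrapT => h; apply: hn; exists y1; split => //; rewrite ey; by left.
    have r2 : range f y2.
      apply: contrapT => h; apply: hn; exists y2; split => //; rewrite ey; by right.
    case: r1 => s1 _ e1; case: r2 => s2 _ e2.
    have p2 : exists x y, [set s1] `|` [set s2] = [set x] `|` [set y] by exists s1, s2.
    exists (exist (fun A : set S => exists x y, A = [set x] `|` [set y]) _ p2) => //; apply: F2_eq => /=.
    by rewrite ey image_setU !image_set1 e1 e2.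
  pose U := fun i : nat => if i is 0 then ~` range f else setT.
  have oU : forall i, (i < 2)%N -> open (U i).
    by case => [|i] _ /=; [exact: closed_openC | exact: openT].
  apply: filterS (viet_nbhs (isT : (0 < 2)%N) oU _).
    move=> Z [/= Z1 Z2] [W _ eW]; rewrite -eW in Z2.
    have [_ [[w _ <-] /= nw]] := Z2 0%N isT; apply: nw; by exists w.
  split.
    by move=> z _; exists 1%N.
  case=> [|j] _ /=; first by exists x.
  by have [z Yz] := F2_ne Y; exists z.
- apply: emb_open => A N nN.
  apply: (@F2_master S (fun N => nbhs (F2map f A) (pre (F2map f) N)) A) => //.
  + by apply: filterS (filterT) => ? ? ? ?.
  + move=> P Q nP nQ; apply: filterS (filterI nP nQ) => y [Py Qy] q eq.
    by split; [exact: Py | exact: Qy].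
  + move=> P Q PQ; apply: filterS => y Py q eq; apply: PQ; exact: Py.
  move=> k W k0 oW [/= H1 H2].
  pose V := fun i => interior (pre f (W i)).
  have oV : forall i, (i < k)%N -> open (V i) by move=> i _; exact: open_interior.
  apply: filterS (viet_nbhs k0 oV _).
    move=> Y HY q eY; move: HY; rewrite eY => -[/= Z1 Z2]; split.
      move=> x qx; have [i ik Vi] := Z1 (f x) (ex_intro2 _ _ x qx erefl).
      by exists i => //; apply: (interior_subset Vi).
    move=> j jk; have [_ [[x qx <-] Vx]] := Z2 j jk.
    by exists x; split => //; apply: (interior_subset Vx).
  split.
    move=> _ [x Ax <-]; have [i ik Wi] := H1 x Ax; exists i => //.
    apply: ef; apply: open_nbhs_nbhs; split => //; exact: oW.
  move=> j jk; have [x [Ax Wx]] := H2 j jk; exists (f x); split; first by exists x.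
  apply: ef; apply: open_nbhs_nbhs; split => //; exact: oW.
Qed.

Lemma fan_master (G : set (set seq_fan)) p :
  G setT -> (forall A B, G A -> G B -> G (A `&` B)) ->
  (forall A B, A `<=` B -> G A -> G B) ->
  (forall B, fan_base B -> B p -> G B) ->
  forall A, nbhs p A -> G A.
Proof.
move=> GT GI GS GD A /fan_nbhsP [B [fB Bp BA]].
apply: GS BA _; exact: (finI_G GT GI GD fB Bp).
Qed.

Lemma arens_master (G : set (set arens)) p :
  G setT -> (forall A B, G A -> G B -> G (A `&` B)) ->
  (forall A B, A `<=` B -> G A -> G B) ->
  (forall B, arens_base B -> B p -> G B) ->
  forall A, nbhs p A -> G A.
Proof.
move=> GT GI GS GD A /arens_nbhsP [B [fB Bp BA]].
apply: GS BA _; exact: (finI_G GT GI GD fB Bp).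
Qed.

Lemma fan_thr (A : set seq_fan) : nbhs (None : seq_fan) A ->
  exists g : nat -> nat, forall n m, (g n < m)%N -> A (Some (n, m)).
Proof.
apply: (@fan_master (fun A => exists g : nat -> nat, forall n m, (g n < m)%N -> A (Some (n, m)))).
- by exists (fun _ => 0%N).
- move=> P Q [g1 H1] [g2 H2]; exists (fun n => maxn (g1 n) (g2 n)) => n m.
  rewrite gtn_max => /andP [h1 h2]; split; [exact: H1 | exact: H2].
- by move=> P Q PQ [g H]; exists g => n m /H /PQ.
- move=> B [[s ->] //| [f ->]] _; exists f => n m fm; right; by exists n, m.
Qed.

Lemma nbhs_bigI_nat (T : topologicalType) (x : T) k (P : nat -> Prop) (U : nat -> set T) :
  (forall j, (j < k)%N -> P j -> nbhs x (U j)) ->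
  nbhs x [set y | forall j, (j < k)%N -> P j -> U j y].
Proof.
elim: k => [|k IH] H.
  by apply: filterS (filterT) => y _ j.
have h1 := IH (fun j jk => H j (ltnW (leq_trans jk (leqnn k.+1)))).
have h2 : nbhs x [set y | P k -> U k y].
  have [Pk|nPk] := pselect (P k).
    by apply: filterS (H k (ltnSn k) Pk) => y Uy _.
  by apply: filterS (filterT) => y _ /nPk.
apply: filterS (filterI h1 h2) => y [H1 H2] j.
rewrite ltnS leq_eqVlt => /orP [/eqP -> //| jk]; exact: H1.
Qed.

Definition pa (p : arens) : seq_fan :=
  match p with None => None | Some (n, None) => None | Some (n, Some m) => Some (0%N, n) end.
Definition pb (p : arens) : seq_fan :=
  match p with None => None | Some (n, None) => Some (0%N, n) | Some (n, Some m) => Some (n.+1, m) end.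

Definition phi (p : arens) : F2 seq_fan :=
  exist (fun A : set seq_fan => exists x y, A = [set x] `|` [set y])
    ([set pa p] `|` [set pb p]) (ex_intro _ (pa p) (ex_intro _ (pb p) erefl)).

Definition fanN (f : nat -> nat) : set seq_fan :=
  [set None] `|` [set p | exists n m : nat, (f n < m)%N /\ p = Some (n, m)].

Lemma fanN_open f : open (fanN f).
Proof. by apply: fan_open; right; exists f. Qed.

Lemma fan1_open s : open [set Some s : seq_fan].
Proof. by apply: fan_open; left; exists s. Qed.

Definition U2 (T : Type) (U0 U1 : set T) := fun i : nat => if i is 0%N then U0 else U1.

Lemma viet2P (T : Type) (Z : F2 T) (U0 U1 : set T) :
  vietoris_set 2 (U2 U0 U1) Z <->
  [/\ forall x, proj1_sig Z x -> U0 x \/ U1 x,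
      proj1_sig Z `&` U0 !=set0 & proj1_sig Z `&` U1 !=set0].
Proof.
split.
  move=> [/= H1 H2]; split.
  - by move=> x /H1 [[|[|i]] //= _ h]; [left | right].
  - exact: (H2 0%N).
  - exact: (H2 1%N).
move=> [H1 H2 H3]; split => /=.
  by move=> x /H1 [h|h]; [exists 0%N | exists 1%N].
by case=> [|[|j]].
Qed.

Lemma viet2_nbhs (T : topologicalType) (Z : F2 T) (U0 U1 : set T) :
  open U0 -> open U1 ->
  (forall x, proj1_sig Z x -> U0 x \/ U1 x) ->
  proj1_sig Z `&` U0 !=set0 -> proj1_sig Z `&` U1 !=set0 ->
  nbhs Z (vietoris_set 2 (U2 U0 U1)).
Proof.
move=> o0 o1 h1 h2 h3; apply: viet_nbhs => //.
  by case=> [|[|i]].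
by apply/viet2P.
Qed.

Lemma viet_all (T : Type) (Z : F2 T) k (U : nat -> set T) : (0 < k)%N ->
  (forall z, proj1_sig Z z -> forall j, (j < k)%N -> U j z) -> vietoris_set k U Z.
Proof.
move=> k0 H; split => /=.
  by move=> z Zz; exists 0%N => //; apply: H.
move=> j jk; have [z Zz] := F2_ne Z; exists z; split => //; exact: H.
Qed.

Lemma pre_mono (S T : Type) (f : S -> T) (A B : set S) : A `<=` B -> pre f A `<=` pre f B.
Proof. by move=> AB y Hy q e; apply: AB; apply: Hy. Qed.

Lemma phi_inj : injective phi.
Proof.
move=> p q e; have e1 := congr1 (@proj1_sig _ _) e; move: e1 => /= e1.
have h1 : pa p = pa q \/ pa p = pb q.
  by have : ([set pa q] `|` [set pb q]) (pa p) by rewrite -e1; left.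
have h2 : pb p = pa q \/ pb p = pb q.
  by have : ([set pa q] `|` [set pb q]) (pb p) by rewrite -e1; right.
have h3 : pa q = pa p \/ pa q = pb p.
  by have : ([set pa p] `|` [set pb p]) (pa q) by rewrite e1; left.
have h4 : pb q = pa p \/ pb q = pb p.
  by have : ([set pa p] `|` [set pb p]) (pb q) by rewrite e1; right.
move: h1 h2 h3 h4; clear e e1.
case: p => [[n [m|]]|]; case: q => [[n' [m'|]]|] /=; intuition congruence.
Qed.

Lemma phi_cont : continuous phi.
Proof.
move=> p B nB.
apply: (@F2_master _ (fun B => nbhs p (phi @^-1` B)) (phi p)) nB.
- exact: filterT.
- by move=> ? ? ? ?; apply: filterI.
- by move=> P Q PQ; apply: filterS => y /PQ.
move=> k U k0 oU [/= H1 H2].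
have nW := @nbhs_bigI_nat _ (None : seq_fan) k (fun j => U j None) U
  (fun j jk Pj => open_nbhs_nbhs (conj (oU j jk) Pj)).
have [g Hg] := fan_thr nW.
case: p H1 H2 => [[n [m|]]|] H1 H2.
-
  have HB : arens_base [set Some (n, Some m)] by left; exists n, m.
  apply: filterS (open_nbhs_nbhs (conj (arens_open HB) erefl)) => q -> /=.
  by split.
-
  have HB : arens_base (arens_nbhs_x n (g n.+1)) by right; left; exists n, (g n.+1).
  have xB : arens_nbhs_x n (g n.+1) (Some (n, None)) by left.
  apply: filterS (open_nbhs_nbhs (conj (arens_open HB) xB)) => q [->|[m gm ->]] /=.
    by split.
  split.
    move=> z [->|->].
      exact: H1 (Some (0%N, n)) (or_intror erefl).
    have [i ik Ui] := H1 None (or_introl erefl).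
    by exists i => //; apply: Hg gm i ik Ui.
  move=> j jk; have [z [[->|->] Uz]] := H2 j jk.
    by exists (Some (n.+1, m)); split; [right | exact: Hg gm j jk Uz].
  by exists (Some (0%N, n)); split; [left|].
-
  have UN : forall j, (j < k)%N -> U j None.
    by move=> j jk; have [z [[->|->] Uz]] := H2 j jk.
  have HB : arens_base ([set None] `|` \bigcup_(n in [set n | (g 0%N < n)%N])
                         arens_nbhs_x n (g n.+1)).
    by right; right; exists (g 0%N), (fun n => g n.+1).
  apply: filterS (open_nbhs_nbhs (conj (arens_open HB) (or_introl erefl))).
  move=> q Bq; apply: viet_all => // z Zz j jk.
  case: Bq Zz => [->|[n /= gn [->|[m gm ->]]]] /= [->|->] //; try exact: UN.
  + exact: Hg gn j jk (UN j jk).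
  + exact: Hg gn j jk (UN j jk).
  + exact: Hg gm j jk (UN j jk).
Qed.

Lemma emb_iso n m : nbhs (phi (Some (n, Some m))) (pre phi [set Some (n, Some m)]).
Proof.
apply: filterS (@viet2_nbhs _ (phi (Some (n, Some m))) [set Some (0%N, n)]
                  [set Some (n.+1, m)] (fan1_open _) (fan1_open _) _ _ _).
- move=> Y HY q eY; move: HY; rewrite eY => /viet2P [_ _ [z [Zz ez]]].
  move: Zz; rewrite ez; case: q {eY} => [[n' [m'|]]|] /= [e|e]; congruence.
- by move=> x /= [->|->]; [left|right].
- by exists (Some (0%N, n)); split => //; left.
- by exists (Some (n.+1, m)); split => //; right.
Qed.

Lemma emb_x n k0 : nbhs (phi (Some (n, None))) (pre phi (arens_nbhs_x n k0)).
Proof.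
apply: filterS (@viet2_nbhs _ (phi (Some (n, None))) (fanN (fun _ => k0))
                  [set Some (0%N, n)] (fanN_open _) (fan1_open _) _ _ _).
- move=> Y HY q eY; move: HY; rewrite eY => /viet2P [HA _ [z [Zz ez]]].
  move: Zz HA; rewrite ez; case: q {eY} => [[n' [m'|]]|] /= [e|e] HA; try congruence.
  + have ? : n' = n by congruence.
    subst n'; right; exists m' => //.
    case: (HA (Some (n.+1, m')) (or_intror erefl)) => [[e1|[a [b [hb e1]]]]|e1];
      congruence.
  + by left; congruence.
- by move=> x /= [->|->]; [left; left|right].
- by exists None; split => //; [left | left].
- by exists (Some (0%N, n)); split => //; right.
Qed.

Lemma emb_inf K (F : nat -> nat) : nbhs (phi None)
  (pre phi ([set None] `|` \bigcup_(n in [set n | (K < n)%N]) arens_nbhs_x n (F n))).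
Proof.
pose h := fun i : nat => if i is i'.+1 then F i' else K.
have nV : nbhs (phi None) (vietoris_set 1 (fun _ => fanN h)).
  apply: viet_nbhs => //; first by move=> *; exact: fanN_open.
  by apply: viet_all => // z /= [->|->] j _; left.
apply: filterS nV => Y [/= HA _] q eY; move: HA; rewrite eY.
case: q {eY} => [[n' [m'|]]|] /= HA.
- right; exists n'.
    have [i _ [e1|[a [b [hb e1]]]]] := HA (Some (0%N, n')) (or_introl erefl);
      first by [].
    by case: e1 hb => <- <-.
  right; exists m' => //.
  have [i _ [e1|[a [b [hb e1]]]]] := HA (Some (n'.+1, m')) (or_intror erefl);
    first by [].
  by case: e1 hb => <- <-.
- right; exists n'; last by left.
  have [i _ [e1|[a [b [hb e1]]]]] := HA (Some (0%N, n')) (or_intror erefl);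
    first by [].
  by case: e1 hb => <- <-.
- by left.
Qed.

Lemma phi_emb : emb phi.
Proof.
move=> x A nA.
apply: (@arens_master (fun A => nbhs (phi x) (pre phi A)) x) nA.
- by apply: filterS (filterT) => ? ? ? ?.
- move=> P Q nP nQ; apply: filterS (filterI nP nQ) => y [Py Qy] q eq.
  by split; [exact: Py | exact: Qy].
- by move=> P Q PQ; apply: filterS; apply: pre_mono.
move=> B [[n [m ->]] | [[n [k0 ->]] | [K [F ->]]]] Bx.
- by rewrite Bx; exact: emb_iso.
- case: Bx => [->|[m km ->]]; first exact: emb_x.
  by apply: filterS (emb_iso n m); apply: pre_mono => _ ->; right; exists m.
- case: Bx => [->|[n Kn [->|[m fm ->]]]]; first exact: emb_inf.
    apply: filterS (emb_x n (F n)); apply: pre_mono => q Hq; right; by exists n.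
  apply: filterS (emb_iso n m); apply: pre_mono => _ ->; right; exists n => //.
  by right; exists m.
Qed.

Lemma closed_aux2 (Y : F2 seq_fan) a b :
  proj1_sig Y = [set Some a] `|` [set Some b] -> ~ range phi Y ->
  nbhs Y (~` range phi).
Proof.
move=> eY nY.
apply: filterS (@viet2_nbhs _ Y [set Some a] [set Some b] (fan1_open _) (fan1_open _) _ _ _).
- move=> Z /viet2P [HA [z1 [Z1 e1]] [z2 [Z2 e2]]] [q _ eq]; apply: nY; exists q => //.
  rewrite eq; apply: F2_eq; rewrite eY eqEsubset; split.
    by move=> z /HA.
  by move=> z [->|->]; [rewrite -e1 | rewrite -e2].
- by rewrite eY.
- by exists (Some a); rewrite eY; split => //; left.
- by exists (Some b); rewrite eY; split => //; right.
Qed.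

Lemma closed_aux (Y : F2 seq_fan) t :
  proj1_sig Y = [set None] `|` [set t] -> ~ range phi Y ->
  nbhs Y (~` range phi).
Proof.
move=> eY nY.
case: t eY => [[[|i] j]|] eY.
- by exfalso; apply: nY; exists (Some (j, None)) => //; apply: F2_eq; rewrite eY.
- apply: filterS (@viet2_nbhs _ Y (fanN (fun _ => i)) [set Some (i.+1, j)]
                   (fanN_open _) (fan1_open _) _ _ _).
  + move=> Z /viet2P [HA _ [z [Zz ez]]] [q _ eq].
    move: Zz HA; rewrite -eq ez; case: q {eq} => [[n' [m'|]]|] /= [e|e] HA; try congruence.
    have ? : n' = i by congruence.
    subst n'.
    case: (HA (Some (0%N, i)) (or_introl erefl)) => [[e1|[a [b [hb e1]]]]|e1];
      try congruence.
    by case: e1 hb => _ <-; rewrite ltnn.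
  + by rewrite eY => x [->|->]; [left; left | right].
  + by exists None; rewrite eY; split; left.
  + by exists (Some (i.+1, j)); rewrite eY; split => //; right.
- by exfalso; apply: nY; exists None => //; apply: F2_eq; rewrite eY.
Qed.

Lemma phi_closed : closed (range phi).
Proof.
apply: closed_rangeP => Y nY.
have [s [t eY]] := proj2_sig Y.
case: s eY => [a|] eY; last exact: closed_aux eY nY.
case: t eY => [b|] eY; first exact: closed_aux2 eY nY.
by apply: closed_aux nY; rewrite eY setUC.
Qed.

Lemma phi_ce : closed_embedding phi.
Proof.
split.
- exact: phi_inj.
- exact: phi_cont.
- exact: phi_closed.
- exact: emb_open phi_emb.
Qed.

Theorem proposition3p8 (X : topologicalType) :
  hausdorff_space X -> regular_space X ->
  contains_closed_copy seq_fan X ->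
  contains_closed_copy arens (F2 X).
Proof.
move=> _ _ [f cf].
exists (F2map f \o phi); apply: ce_comp phi_ce (ce_F2map cf).
Qed.
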